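(* Let $(M,d,e)$ be a commutative comonoid in the symmetric monoidal category $\mathcal{C}_G$ of payoff Conway games. Then $M$ is a negative Conway game, i.e. every initial move of $M$ is an Opponent move.
   Context: A Conway game $A=(V_A,E_A,\lambda_A)$ is a rooted directed graph with root $\star_A$ and polarity $\lambda_A:E_A\to\{-1,+1\}$ ($-1$ Opponent, $+1$ Player); an initial move is an edge leaving $\star_A$. Plays are paths from the root; a strategy on $A$ is a set of alternating even-length plays containing the empty play, whose nonempty plays start with an Opponent move, closed under even-length prefixes and deterministic. A payoff game additionally has $\kappa_A=(\kappa^+_A,\kappa^-_A)$ from paths to $\mathbb{N}\times\mathbb{N}$ with: $\lambda_A(m)=-1\Rightarrow\kappa^+_A(m)=0$, $\lambda_A(m)=+1\Rightarrow\kappa^-_A(m)=0$; $\kappa_A(t)\le\kappa_A(s;t)$; $\kappa_A(s;t)\le\kappa_A(s)+\kappa_A(t)$; empty paths have payoff $(0,0)$. $A^*$ reverses polarities and swaps $\kappa^+,\kappa^-$; $A\otimes B$ is the product graph (moves in either component, polarity and payoff summed from projections); $1$ is the one-position game. $\mathcal{C}_G$ has payoff games as objects and as morphisms $A\to B$ the winning strategies on $A^*\otimes B$ (those whose every played path $s$ satisfies $\kappa^+(s)=0\Rightarrow\kappa^-(s)=0$), composed by parallel composition and hiding, with copycat identities; it is symmetric monoidal with $\otimes$, unit $1$ and symmetry $\alpha_{A,B}:A\otimes B\to B\otimes A$ the copycat strategy swapping components. A commutative comonoid is an object $M$ with $d:M\to M\otimes M$ and $e:M\to 1$ satisfying coassociativity,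 counit laws and $d;\alpha_{M,M}=d$. *)

(* Defs.v *)
From mathcomp Require Import all_boot.
Set Implicit Arguments. Unset Strict Implicit. Unset Printing Implicit Defensive.

(** Polarity: [gpol e = true] means Player (+1), [false] means Opponent (-1). *)
Record arena := Arena {
  gV : Type;
  gE : Type;
  gsrc : gE -> gV;
  gtgt : gE -> gV;
  groot : gV;
  gpol : gE -> bool;
  gkp : seq gE -> nat;
  gkm : seq gE -> nat
}.
Arguments gsrc : clear implicits.
Arguments gtgt : clear implicits.
Arguments groot : clear implicits.
Arguments gpol : clear implicits.
Arguments gkp : clear implicits.
Arguments gkm : clear implicits.

Fixpoint chain (G : arena) (s : seq (gE G)) : Prop :=
  match s with
  | [::] => True
  | e :: s' =>
      match s' with
      | [::] => True
      | f :: _ => gtgt G e = gsrc G f /\ chain s'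
      end
  end.

Fixpoint path_from (G : arena) (v : gV G) (s : seq (gE G)) : Prop :=
  match s with
  | [::] => True
  | e :: s' => gsrc G e = v /\ path_from (gtgt G e) s'
  end.

Definition play (G : arena) (s : seq (gE G)) : Prop := path_from (groot G) s.

Fixpoint alt_from (G : arena) (b : bool) (s : seq (gE G)) : Prop :=
  match s with
  | [::] => True
  | e :: s' => gpol G e = b /\ alt_from (~~ b) s'
  end.

Definition alternating (G : arena) (s : seq (gE G)) : Prop := alt_from false s.

Definition payoff_game (G : arena) : Prop :=
  (forall m, gpol G m = false -> gkp G [:: m] = 0) /\
  (forall m, gpol G m = true -> gkm G [:: m] = 0) /\
  (forall s t, chain (s ++ t) ->
     gkp G t <= gkp G (s ++ t) /\ gkm G t <= gkm G (s ++ t)) /\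
  (forall s t, chain (s ++ t) ->
     gkp G (s ++ t) <= gkp G s + gkp G t /\ gkm G (s ++ t) <= gkm G s + gkm G t) /\
  gkp G [::] = 0 /\ gkm G [::] = 0.

Definition negative (G : arena) : Prop :=
  forall m, gsrc G m = groot G -> gpol G m = false.

Definition dual (A : arena) : arena :=
  {| gV := gV A; gE := gE A; gsrc := @gsrc A; gtgt := @gtgt A; groot := groot A;
     gpol := fun m => ~~ gpol A m; gkp := @gkm A; gkm := @gkp A |}.

Definition tE (A B : arena) : Type := (gE A * gV B + gV A * gE B)%type.

Definition projL (A B : arena) (e : tE A B) : option (gE A) :=
  match e with inl (a, _) => Some a | inr _ => None end.
Definition projR (A B : arena) (e : tE A B) : option (gE B) :=
  match e with inl _ => None | inr (_, b) => Some b end.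

Definition tensor (A B : arena) : arena :=
  {| gV := (gV A * gV B)%type;
     gE := tE A B;
     gsrc := fun e => match e with
                      | inl (a, y) => (gsrc A a, y)
                      | inr (x, b) => (x, gsrc B b) end;
     gtgt := fun e => match e with
                      | inl (a, y) => (gtgt A a, y)
                      | inr (x, b) => (x, gtgt B b) end;
     groot := (groot A, groot B);
     gpol := fun e => match e with
                      | inl (a, _) => gpol A a
                      | inr (_, b) => gpol B b end;
     gkp := fun s => gkp A (pmap (@projL A B) s) + gkp B (pmap (@projR A B) s);
     gkm := fun s => gkm A (pmap (@projL A B) s) + gkm B (pmap (@projR A B) s) |}.

Definition unitg : arena :=
  {| gV := unit; gE := Empty_set; gsrc := fun e => match e with end;
     gtgt := fun e => match e with end; groot := tt;
     gpol := fun e => match e with end; gkp := fun _ => 0; gkm := fun _ => 0 |}.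

Definition strategy (G : arena) (sigma : seq (gE G) -> Prop) : Prop :=
  sigma [::] /\
  (forall s, sigma s -> play s /\ alternating s /\ ~~ odd (size s)) /\
  (forall s n, sigma s -> ~~ odd n -> sigma (take n s)) /\
  (forall s m n n', sigma (s ++ [:: m; n]) -> sigma (s ++ [:: m; n']) -> n = n').

Definition winning (G : arena) (sigma : seq (gE G) -> Prop) : Prop :=
  forall s, sigma s -> gkp G s = 0 -> gkm G s = 0.

Definition Hom (A B : arena) : Type := seq (gE (tensor (dual A) B)) -> Prop.

Definition morphism (A B : arena) (sigma : Hom A B) : Prop :=
  strategy sigma /\ winning sigma.

Definition heq (A B : arena) (sigma tau : Hom A B) : Prop :=
  forall s, sigma s <-> tau s.

(** composition by parallel composition and hiding.
    Interaction sequences are paths from the root in the product graph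
    (A (x) B) (x) C (positions V_A * V_B * V_C). *)
Definition pAB (A B C : arena) (e : gE (tensor (tensor A B) C))
  : option (gE (tensor (dual A) B)) :=
  match e with inl (x, _) => Some x | inr _ => None end.
Definition pBC (A B C : arena) (e : gE (tensor (tensor A B) C))
  : option (gE (tensor (dual B) C)) :=
  match e with
  | inl (inl _, _) => None
  | inl (inr (_, b), z) => Some (inl (b, z))
  | inr ((_, y), c) => Some (inr (y, c))
  end.
Definition pAC (A B C : arena) (e : gE (tensor (tensor A B) C))
  : option (gE (tensor (dual A) C)) :=
  match e with
  | inl (inl (a, _), z) => Some (inl (a, z))
  | inl (inr _, _) => None
  | inr ((x, _), c) => Some (inr (x, c))
  end.

Definition compose (A B C : arena) (sigma : Hom A B) (tau : Hom B C) : Hom A C :=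
  fun s => exists u : seq (gE (tensor (tensor A B) C)),
    play u /\ sigma (pmap (@pAB A B C) u) /\ tau (pmap (@pBC A B C) u) /\
    s = pmap (@pAC A B C) u.

Definition tAB (A B C D : arena)
  (e : gE (tensor (dual (tensor A C)) (tensor B D))) : option (gE (tensor (dual A) B)) :=
  match e with
  | inl (inl (a, _), (y, _)) => Some (inl (a, y))
  | inl (inr _, _) => None
  | inr ((x, _), inl (b, _)) => Some (inr (x, b))
  | inr (_, inr _) => None
  end.
Definition tCD (A B C D : arena)
  (e : gE (tensor (dual (tensor A C)) (tensor B D))) : option (gE (tensor (dual C) D)) :=
  match e with
  | inl (inl _, _) => None
  | inl (inr (_, c), (_, w)) => Some (inl (c, w))
  | inr (_, inl _) => None
  | inr ((_, z), inr (_, d)) => Some (inr (z, d))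
  end.

Definition tens (A B C D : arena) (sigma : Hom A B) (tau : Hom C D)
  : Hom (tensor A C) (tensor B D) :=
  fun s => play s /\ alternating s /\ ~~ odd (size s) /\
    sigma (pmap (@tAB A B C D) s) /\ tau (pmap (@tCD A B C D) s).

Definition copycat (A B : arena) (f : gE A -> gE B) : Hom A B :=
  fun s => play s /\ alternating s /\ ~~ odd (size s) /\
    forall n, ~~ odd n ->
      map f (pmap (@projL (dual A) B) (take n s)) = pmap (@projR (dual A) B) (take n s).

Definition idg (A : arena) : Hom A A := copycat (fun e : gE A => e).

Definition swapE (A B : arena) (e : gE (tensor A B)) : gE (tensor B A) :=
  match e with inl (a, y) => inr (y, a) | inr (x, b) => inl (b, x) end.
Definition sym (A B : arena) : Hom (tensor A B) (tensor B A) := copycat (@swapE A B).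

Definition assocE (A B C : arena) (e : gE (tensor (tensor A B) C))
  : gE (tensor A (tensor B C)) :=
  match e with
  | inl (inl (a, y), z) => inl (a, (y, z))
  | inl (inr (x, b), z) => inr (x, inl (b, z))
  | inr ((x, y), c) => inr (x, inr (y, c))
  end.
Definition assoc (A B C : arena) : Hom (tensor (tensor A B) C) (tensor A (tensor B C)) :=
  copycat (@assocE A B C).

Definition lunitE (A : arena) (e : gE (tensor unitg A)) : gE A :=
  match e with inl (v, _) => match v with end | inr (_, a) => a end.
Definition lunit (A : arena) : Hom (tensor unitg A) A := copycat (@lunitE A).

Definition runitE (A : arena) (e : gE (tensor A unitg)) : gE A :=
  match e with inl (a, _) => a | inr (_, v) => match v with end end.
Definition runit (A : arena) : Hom (tensor A unitg) A := copycat (@runitE A).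

Arguments idg : clear implicits.
Arguments sym : clear implicits.
Arguments assoc : clear implicits.
Arguments lunit : clear implicits.
Arguments runit : clear implicits.

Definition comm_comonoid (M : arena) (d : Hom M (tensor M M)) (e : Hom M unitg) : Prop :=
  morphism d /\ morphism e /\
  heq (compose (compose d (tens d (idg M))) (assoc M M M))
      (compose d (tens (idg M) d)) /\
  heq (compose (compose d (tens e (idg M))) (lunit M)) (idg M) /\
  heq (compose (compose d (tens (idg M) e)) (runit M)) (idg M) /\
  heq (compose d (sym M M)) d.

(* Main.v *)
Require Import Defs.
From mathcomp Require Import all_boot.
Set Implicit Arguments. Unset Strict Implicit.

Lemma sym_contra (M : arena) (d : Hom M (tensor M M)) :
  strategy d -> heq (compose d (sym M M)) d ->
  forall (a : gE M) (yz : gV (tensor M M)) (x : gV M) (b : gE (tensor M M)) rest,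
  d (inl (a, yz) :: inr (x, b) :: rest) -> False.
Proof.
move=> [_ [Hpl [Htk Hdet]]] Hsym a yz x b rest Hd.
have H2 : d [:: inl (a, yz); inr (x, b)] by have := Htk _ 2 Hd isT; rewrite /= take0.
have [Hp [Ha _]] := Hpl _ H2.
move: Hp Ha; rewrite /play /alternating /=.
move=> [Hsa [Hsb _]] [_ [Hpb _]].
case: Hsa => Hsa Hyz; subst yz.
case: Hsb => Hx Hsb; subst x.
have key : forall u : seq (gE (tensor (tensor M (tensor M M)) (tensor M M))),
   play u -> sym M M (pmap (@pBC _ _ _) u) ->
   pmap (@pAB _ _ _) u = [:: inl (a, (groot M, groot M)); inr (gtgt M a, b)] ->
   pmap (@pAC _ _ _) u = [:: inl (a, (groot M, groot M)); inr (gtgt M a, swapE b)] ->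
   False.
  move=> u Hu Hs HAB HAC.
  have Hc : compose d (sym M M) [:: inl (a, (groot M, groot M)); inr (gtgt M a, swapE b)].
    by exists u; rewrite HAB HAC.
  have Hd2 := (Hsym _).1 Hc.
  have := Hdet [::] _ _ _ H2 Hd2.
  by clear; case: b => [[b1 y]|[y b1]].
case: b Hd H2 Hsb Hpb key => [[b1 y]|[y b1]] /= Hd H2 [Hb1 Hy] Hpb key; subst y.
  apply: (key [:: inl (inl (a, (groot M, groot M)), (groot M, groot M));
                 inl (inr (gtgt M a, inl (b1, groot M)), (groot M, groot M));
                 inr ((gtgt M a, (gtgt M b1, groot M)), inr (groot M, b1))]) => //;
  rewrite /play /sym /copycat /alternating /=; do ?split => //=; rewrite ?Hsa ?Hb1 ?Hy ?Hpb //;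
  by case=> [|[|n]].
apply: (key [:: inl (inl (a, (groot M, groot M)), (groot M, groot M));
                 inl (inr (gtgt M a, inr (groot M, b1)), (groot M, groot M));
                 inr ((gtgt M a, (groot M, gtgt M b1)), inl (b1, groot M))]) => //;
  rewrite /play /sym /copycat /alternating /=; do ?split => //=; rewrite ?Hsa ?Hb1 ?Hy ?Hpb //;
  by case=> [|[|n]].
Qed.

Lemma u2_lemma (M : arena) (u : seq (gE (tensor (tensor M (tensor M M)) (tensor unitg M)))) :
  alt_from false (pmap (@pAB _ _ _) u) -> alt_from false (pmap (@pBC _ _ _) u) ->
  ((exists x c rest, pmap (@pAC _ _ _) u = inr (x,c) :: rest /\ gpol (tensor unitg M) c) \/
   (exists a x c rest, pmap (@pAC _ _ _) u = inl a :: inr (x,c) :: rest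
        /\ gpol (tensor unitg M) c)) ->
  exists p q rest, pmap (@pAB _ _ _) u = inl p :: inr q :: rest.
Proof.
case: u => [|e0 u]; first by move=> _ _ [[x [c [r [H _]]]]|[a [x [c [r [H _]]]]]].
case: e0 => [[[[a yz]|[x b]] w] | [[xx yy] c]] /=.
- move=> Hv Hw [[x [c [r [H _]]]]|[a' [x [c [r [H Hc]]]]]]; first by [].
  case: H => _ H.
  case: u Hv Hw H => [|e1 u] //=.
  case: e1 => [[[[a1 yz1]|[x1 b1]] w1] | [[xx1 yy1] c1]] /=.
  + by [].
  + by do 3 eexists.
  + move=> _ [Hw _] [_ Hc1 _]; subst c1; by rewrite Hc in Hw.
- by move=> [Hv _] [Hw _]; rewrite Hv in Hw.
- move=> _ [Hw _] [[x [c' [r [H Hc]]]]|[a' [x [c' [r [H Hc]]]]]].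
  + case: H => _ Hc1 _; subst c'; by rewrite Hc in Hw.
  + by [].
Qed.

Lemma u1_lemma (M : arena) (u : seq (gE (tensor (tensor M (tensor unitg M)) M)))
  (m : gE M) r1 r2 :
  gpol M m = true ->
  pmap (@pAC _ _ _) u = [:: inl (m, r1); inr (r2, m)] ->
  alt_from false (pmap (@pBC _ _ _) u) ->
  ((exists x c rest, pmap (@pAB _ _ _) u = inr (x,c) :: rest /\ gpol (tensor unitg M) c) \/
   (exists a x c rest, pmap (@pAB _ _ _) u = inl a :: inr (x,c) :: rest
        /\ gpol (tensor unitg M) c)).
Proof.
move=> Hm.
case: u => [|e0 u] //.
case: e0 => [[[[a y]|[x b]] z] | [[xx yy] c]] /=.
- case=> _ _ H.
  case: u H => [|e1 u] //=.
  case: e1 => [[[[a1 y1]|[x1 b1]] z1] | [[xx1 yy1] c1]] //=.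
  + move=> _ [Hb _]; right; do 4 eexists; split; first by reflexivity.
    by move: Hb; case: b1 => [[[] ?]|[? ?]] /= /negbFE.
  + by case=> _ -> _ [Hw _]; rewrite Hm in Hw.
- move=> _ [Hb _]; left; do 3 eexists; split; first by reflexivity.
  by move: Hb; case: b => [[[] ?]|[? ?]] /= /negbFE.

- by [].
Qed.

Theorem mainTheorem6 (M : arena) (d : Hom M (tensor M M)) (e : Hom M unitg) :
  payoff_game M -> comm_comonoid d e -> negative M.
Proof.
move=> _ [[Hd _] [_ [_ [Hlu [_ Hsym]]]]] m Hsrc.
case Hpm: (gpol M m) => //; exfalso.
pose s0 : seq (gE (tensor (dual M) M)) := [:: inl (m, groot M); inr (gtgt M m, m)].
have Hid : idg M s0.
  rewrite /idg /copycat /play /alternating /s0 /=; rewrite Hsrc Hpm.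
  do ?split => //; by case=> [|[|n]].
case: ((Hlu s0).2 Hid) => u1 [_ [HX [Hl HAC]]].
case: HX => u2 [_ [Hdv [Ht Ht2]]].
have Hl' := Hl.2.1.
have Ht' := Ht.2.1.
have Hv := ((Hd.2.1) _ Hdv).2.1.
have H1 := u1_lemma Hpm (esym HAC) Hl'.
rewrite Ht2 in H1.
have [[a yz] [[x b] [rest Hr]]] := u2_lemma Hv Ht' H1.
rewrite Hr in Hdv.
exact: (sym_contra Hd Hsym Hdv).
Qed.
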